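(* In any finite discounted stochastic game and for any $\bm{\Lambda}=(\Lambda^1,\dots,\Lambda^N)\in\mathbb{R}^N$: (i) for every $\bm{\pi}\in\bm{\Pi}$, $\bm{\pi}\in\bm{\Pi}_{\rm eq}$ if and only if $\{\bm{\pi}\}$ is a minimal cumber set; (ii) for every $\bm{\pi}\in\bm{\Pi}\setminus\bm{\Pi}^{\bm{\Lambda}}_{\rm cumber}$ there is a multi-DM strict best reply path starting at $\bm{\pi}$ and ending in $\bm{\Pi}^{\bm{\Lambda}}_{\rm cumber}$.
   Context: Game setup: finite discounted stochastic game with $N$ decision makers, finite state set $\mathbb{X}$, finite action sets $\mathbb{U}^i$, discount factors $\beta^i\in(0,1)$, costs $c^i:\mathbb{X}\times\mathbb{U}\to\mathbb{R}$, transition kernel $P$. $\Pi^i$ = set of maps $\mathbb{X}\to\mathbb{U}^i$, $\bm{\Pi}=\times_i\Pi^i$; $J^i_x(\bm{\pi})=E[\sum_{t\ge0}(\beta^i)^tc^i(x_t,\bm{\pi}(x_t))\mid x_0=x]$ with $x_{t+1}\sim P(\cdot\mid x_t,\bm{\pi}(x_t))$; $\tilde S^i(\bm{\pi})=\sum_{x\in\mathbb{X}}J^i_x(\bm{\pi})$. Best reply, strict best reply with respect to $\bm{\pi}$ (a best reply to $\bm{\pi}^{-i}$ with strictly smaller $J^i_x$ than $\pi^i$ at some $x$), $\bm{\Pi}_{\rm eq}$ (all DMs best-replying), multi-DM strict best reply path (consecutive elements differ, and every DM that changes switches to a strict best reply with respect to the previous joint policy), $\widetilde{BR}(\bm{\pi})$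 and cumber sets are as follows: $\widetilde{BR}(\bm{\pi})=\{\tilde{\bm{\pi}}:\forall i,\ \tilde\pi^i\ne\pi^i\Rightarrow\tilde\pi^i$ strict best reply with respect to $\bm{\pi}\}$; a nonempty $\tilde{\bm{\Pi}}$ is a cumber set if $\bm{\pi}\in\tilde{\bm{\Pi}}\Rightarrow\widetilde{BR}(\bm{\pi})\subseteq\tilde{\bm{\Pi}}$, minimal if it properly contains no cumber set. Further, $\widetilde{BR}^{\bm{\Lambda}}(\bm{\pi})=\{\tilde{\bm{\pi}}\in\bm{\Pi}:\forall i,\ \tilde\pi^i\ne\pi^i\Rightarrow(\tilde S^i(\bm{\pi})>\Lambda^i$ and $\tilde\pi^i$ is a strict best reply with respect to $\bm{\pi})\}$; a nonempty $\tilde{\bm{\Pi}}\subseteq\bm{\Pi}$ is a $\bm{\Lambda}$-cumber set if $\bm{\pi}\in\tilde{\bm{\Pi}}\Rightarrow\widetilde{BR}^{\bm{\Lambda}}(\bm{\pi})\subseteq\tilde{\bm{\Pi}}$, minimal if it properly contains no other $\bm{\Lambda}$-cumber set; $\bm{\Pi}^{\bm{\Lambda}}_{\rm cumber}$ is the union of all minimal $\bm{\Lambda}$-cumber sets. *)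

(* Defs.v *)
From Stdlib Require Import Reals ClassicalEpsilon.
From mathcomp Require Import all_boot.

Unset Printing Implicit Defensive.
Local Open Scope R_scope.

Record game := Game {
  nDM : nat;
  state : finType;
  act : 'I_nDM -> finType;
  beta : 'I_nDM -> R;
  cost : 'I_nDM -> state -> {dffun forall i : 'I_nDM, act i} -> R;
  (* trans x u y = P(y | x, u) *)
  trans : state -> {dffun forall i : 'I_nDM, act i} -> state -> R;
  beta_range : forall i, (0 < beta i < 1);
  trans_nonneg : forall x u y, (0 <= trans x u y);
  trans_sum : forall x u, \big[Rplus/0]_(y : state) trans x u y = 1
}.

Arguments act {g}.
Arguments beta {g}.
Arguments cost {g}.
Arguments trans {g}.

Section Game.
Variable g : game.

Definition policy (i : 'I_(nDM g)) := {ffun state g -> act i}.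
Definition jpolicy := {dffun forall i : 'I_(nDM g), policy i}.

Definition jact (pi : jpolicy) (x : state g) : {dffun forall i : 'I_(nDM g), act i} :=
  finfun (fun i => pi i x).

Definition upd (pi : jpolicy) (i : 'I_(nDM g)) (p : policy i) : jpolicy :=
  finfun (dfwith (fun j => pi j) p).

(* dist pi t x y = Pr(x_t = y | x_0 = x) under pi *)
Fixpoint dist (pi : jpolicy) (t : nat) (x y : state g) : R :=
  match t with
  | O => if y == x then 1 else 0
  | S t' => \big[Rplus/0]_(z : state g) (dist pi t' x z * trans z (jact pi z) y)
  end.

Definition stage_cost (i : 'I_(nDM g)) (pi : jpolicy) (x : state g) (t : nat) : R :=
  \big[Rplus/0]_(y : state g) (dist pi t x y * cost i y (jact pi y)).

(* J^i_x(pi) = sum_{t>=0} beta^t E[c^i(x_t, pi(x_t))] (the series converges) *)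
Definition J (i : 'I_(nDM g)) (pi : jpolicy) (x : state g) : R :=
  epsilon (inhabits 0)
    (fun v => infinite_sum (fun t => (pow (beta i) t * stage_cost i pi x t)) v).

Definition Stilde (i : 'I_(nDM g)) (pi : jpolicy) : R :=
  \big[Rplus/0]_(x : state g) J i pi x.

Definition best_reply (pi : jpolicy) (i : 'I_(nDM g)) (p : policy i) : Prop :=
  forall (q : policy i) (x : state g), (J i (upd pi i p) x <= J i (upd pi i q) x).

Definition strict_best_reply (pi : jpolicy) (i : 'I_(nDM g)) (p : policy i) : Prop :=
  best_reply pi i p /\ exists x : state g, (J i (upd pi i p) x < J i pi x).

Definition equilibrium (pi : jpolicy) : Prop :=
  forall i, best_reply pi i (pi i).

Definition BRt (pi pt : jpolicy) : Prop :=
  forall i, pt i <> pi i -> strict_best_reply pi i (pt i).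

Definition cumber (S : jpolicy -> Prop) : Prop :=
  (exists pi, S pi) /\ forall pi pt, S pi -> BRt pi pt -> S pt.

Definition min_cumber (S : jpolicy -> Prop) : Prop :=
  cumber S /\
  forall S', cumber S' -> (forall p, S' p -> S p) -> (forall p, S p -> S' p).

Definition BRL (Lam : 'I_(nDM g) -> R) (pi pt : jpolicy) : Prop :=
  forall i, pt i <> pi i ->
    (Stilde i pi > Lam i) /\ strict_best_reply pi i (pt i).

Definition Lcumber (Lam : 'I_(nDM g) -> R) (S : jpolicy -> Prop) : Prop :=
  (exists pi, S pi) /\ forall pi pt, S pi -> BRL Lam pi pt -> S pt.

Definition min_Lcumber (Lam : 'I_(nDM g) -> R) (S : jpolicy -> Prop) : Prop :=
  Lcumber Lam S /\
  forall S', Lcumber Lam S' -> (forall p, S' p -> S p) -> (forall p, S p -> S' p).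

Definition Pi_cumber (Lam : 'I_(nDM g) -> R) (pi : jpolicy) : Prop :=
  exists S, min_Lcumber Lam S /\ S pi.

(* pi = p_0, p_1, ..., p_k with p :: s the sequence: multi-DM strict best
   reply path *)
Fixpoint sbr_path (p : jpolicy) (s : seq jpolicy) : Prop :=
  match s with
  | [::] => True
  | q :: s' => q <> p /\ BRt p q /\ sbr_path q s'
  end.

End Game.

Arguments jact {g}.
Arguments upd {g}.
Arguments dist {g}.
Arguments stage_cost {g}.
Arguments J {g}.
Arguments Stilde {g}.
Arguments best_reply {g}.
Arguments strict_best_reply {g}.
Arguments equilibrium {g}.
Arguments BRt {g}.
Arguments cumber {g}.
Arguments min_cumber {g}.
Arguments BRL {g}.
Arguments Lcumber {g}.
Arguments min_Lcumber {g}.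
Arguments Pi_cumber {g}.
Arguments sbr_path {g}.

(* Main.v *)
From HB Require Import structures.
Require Import Defs.
From Stdlib Require Import Reals Lra Classical ClassicalEpsilon.
From Coquelicot Require Import Coquelicot.
From mathcomp Require Import all_boot.

Local Open Scope R_scope.

Lemma RplusA : associative Rplus. Proof. move=>*; ring. Qed.
Lemma RmultA : associative Rmult. Proof. move=>*; ring. Qed.
HB.instance Definition _ := Monoid.isComLaw.Build R 0 Rplus RplusA Rplus_comm Rplus_0_l.
HB.instance Definition _ := Monoid.isComLaw.Build R 1 Rmult RmultA Rmult_comm Rmult_1_l.
HB.instance Definition _ := Monoid.isMulLaw.Build R 0 Rmult Rmult_0_l Rmult_0_r.
HB.instance Definition _ := Monoid.isAddLaw.Build R Rmult Rplus Rmult_plus_distr_r Rmult_plus_distr_l.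

Section S.
Variable T : finType.

Lemma sum_le (f h : T -> R) : (forall y, f y <= h y) ->
  \big[Rplus/0]_(y : T) f y <= \big[Rplus/0]_(y : T) h y.
Proof.
move=> H; apply: (big_ind2 (fun a b => a <= b)); [lra| |by move=> *; apply H].
move=> *; lra.
Qed.

Lemma sum_ge0 (f : T -> R) : (forall y, 0 <= f y) -> 0 <= \big[Rplus/0]_(y : T) f y.
Proof.
move=> H; apply: (big_ind (fun a => 0 <= a)); [lra| |by move=> *; apply H].
move=> *; lra.
Qed.

Lemma sum_lt (f h : T -> R) y0 : (forall y, f y <= h y) -> f y0 < h y0 ->
  \big[Rplus/0]_(y : T) f y < \big[Rplus/0]_(y : T) h y.
Proof.
move=> H H0; rewrite (bigD1 y0) //= [X in _ < X](bigD1 y0) //=.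
have := (big_ind2 (fun a b => a <= b) (Rle_refl 0) (fun a b c d h1 h2 => Rplus_le_compat _ _ _ _ h1 h2) (P := fun y => y != y0) (r := index_enum T) (F1 := f) (F2 := h) (fun y _ => H y)).
lra.
Qed.

Lemma sum_opp (f h : T -> R) :
  \big[Rplus/0]_(y : T) f y - \big[Rplus/0]_(y : T) h y =
  \big[Rplus/0]_(y : T) (f y - h y).
Proof.
apply: (big_ind3 (fun a b c => a - b = c)); [lra| |by []].
move=> *; lra.
Qed.

Lemma term_le_sum (f : T -> R) y0 : (forall y, 0 <= f y) -> f y0 <= \big[Rplus/0]_(y : T) f y.
Proof.
move=> H; rewrite (bigD1 y0) //=.
have := (big_ind (fun a => 0 <= a) (Rle_refl 0) (fun a b h1 h2 => Rplus_le_le_0_compat _ _ h1 h2) (P := fun y => y != y0) (r := index_enum T) (F := f) (fun y _ => H y)).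
lra.
Qed.

Lemma argmin_seq (f : T -> R) (s : seq T) (a : T) :
  exists2 m, m \in a :: s & forall y, y \in a :: s -> f m <= f y.
Proof.
elim: s a => [|b s IH] a.
  by exists a; rewrite ?inE // => y; rewrite inE => /eqP->; lra.
have [m ms Hm] := IH b.
case: (Rle_lt_dec (f a) (f m)) => Ha.
  exists a; first by rewrite inE eqxx.
  move=> y; rewrite inE => /orP [/eqP->|ys]; [lra|have := Hm y ys; lra].
exists m; first by rewrite inE ms orbT.
move=> y; rewrite inE => /orP [/eqP->|ys]; [lra|by apply Hm].
Qed.

Lemma argmin (f : T -> R) (x : T) : exists m, forall y, f m <= f y.
Proof.
have [m _ Hm] := argmin_seq f (enum T) x.
by exists m => y; apply: Hm; rewrite inE mem_enum orbT.
Qed.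
End S.
Arguments sum_le {T}. Arguments sum_ge0 {T}. Arguments sum_lt {T}. Arguments sum_opp {T}.
Arguments term_le_sum {T}. Arguments argmin {T}.

Lemma is_series_zero : is_series (fun _ : nat => 0) 0.
Proof.
have H : Rabs (/2) < 1 by rewrite Rabs_pos_eq; lra.
have H2 := is_series_scal_r 0 _ _ (is_series_geom _ H).
rewrite Rmult_0_r in H2; apply: (is_series_ext _ _ _ _ H2) => n /=; ring.
Qed.

Lemma is_series_bigsum (I : Type) (r : seq I) (f : I -> nat -> R) (l : I -> R) :
  (forall w, is_series (f w) (l w)) ->
  is_series (fun t => \big[Rplus/0]_(w <- r) f w t) (\big[Rplus/0]_(w <- r) l w).
Proof.
move=> H; elim: r => [|w r IH].
  rewrite big_nil; apply: is_series_ext is_series_zero => n; by rewrite big_nil.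
rewrite big_cons; apply: is_series_ext (is_series_plus _ _ _ _ (H w) IH).
by move=> n; rewrite big_cons.
Qed.

Section G.
Variable g : game.
Variable i : 'I_(nDM g).
Implicit Types (q : jpolicy g) (x y w z : state g).

Definition P q x y := trans x (jact q x) y.
Definition Tq q (v : state g -> R) x :=
  cost i x (jact q x) + beta i * \big[Rplus/0]_(y : state g) (P q x y * v y).

Lemma sum_delta (F : state g -> R) x :
  \big[Rplus/0]_(z : state g) ((if z == x then 1 else 0) * F z) = F x.
Proof.
rewrite (bigD1 x) //= eqxx big1; first ring.
by move=> z /negbTE ->; ring.
Qed.

Lemma sum_delta' (F : state g -> R) y :
  \big[Rplus/0]_(z : state g) (F z * (if y == z then 1 else 0)) = F y.
Proof.
rewrite (bigD1 y) //= eqxx big1; first ring.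
by move=> z; rewrite eq_sym => /negbTE ->; ring.
Qed.

Lemma dist_S q t x y : Defs.dist q t.+1 x y =
  \big[Rplus/0]_(z : state g) (Defs.dist q t x z * trans z (jact q z) y).
Proof. by []. Qed.

Lemma dist_back q t x y :
  Defs.dist q t.+1 x y = \big[Rplus/0]_(w : state g) (P q x w * Defs.dist q t w y).
Proof.
elim: t x y => [|t IH] x y.
  rewrite /= sum_delta; rewrite /P; by rewrite sum_delta'.
rewrite dist_S.
under eq_bigr => z _ do rewrite IH big_distrl /=.
rewrite exchange_big /=; apply: eq_bigr => w _.
rewrite ?dist_S big_distrr /=; apply: eq_bigr => z _; ring.
Qed.

Lemma dist_ge0 q t x y : 0 <= Defs.dist q t x y.
Proof.
elim: t y => [|t IH] y /=; first by case: eqP; lra.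
apply: sum_ge0 => z; apply: Rmult_le_pos => //; apply: trans_nonneg.
Qed.

Lemma dist_sum1 q t x : \big[Rplus/0]_(y : state g) Defs.dist q t x y = 1.
Proof.
elim: t => [|t IH] /=.
  by rewrite -[RHS](sum_delta (fun _ => 1) x); apply: eq_bigr => y _; rewrite eq_sym; ring.
rewrite exchange_big /= -[RHS]IH; apply: eq_bigr => z _.
by rewrite -big_distrr /= trans_sum Rmult_1_r.
Qed.

Lemma P_sum1 q x : \big[Rplus/0]_(y : state g) P q x y = 1.
Proof. exact: trans_sum. Qed.

Lemma P_ge0 q x y : 0 <= P q x y.
Proof. exact: trans_nonneg. Qed.

Lemma stage_back q x t :
  stage_cost i q x t.+1 = \big[Rplus/0]_(w : state g) (P q x w * stage_cost i q w t).
Proof.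
rewrite /stage_cost.
under eq_bigr => y _ do rewrite dist_back big_distrl /=.
rewrite exchange_big /=; apply: eq_bigr => w _.
rewrite big_distrr /=; apply: eq_bigr => z _; ring.
Qed.

Definition Mb q := \big[Rplus/0]_(y : state g) Rabs (cost i y (jact q y)).

Lemma stage_bound q x t : Rabs (stage_cost i q x t) <= Mb q.
Proof.
rewrite /stage_cost /Mb.
apply: Rle_trans.
  apply: (@big_ind2 R R (fun a b => Rabs a <= b) 0 Rplus 0 Rplus).
  - by rewrite Rabs_R0; lra.
  - move=> a b c d h1 h2; apply: Rle_trans (Rabs_triang _ _) _; lra.
  - by move=> y _; apply: Rle_refl.
apply: sum_le => y; rewrite Rabs_mult.
have h1 := dist_ge0 q t x y.
have h2 : Defs.dist q t x y <= 1.
  rewrite -(dist_sum1 q t x). apply: (@term_le_sum (state g) (fun y => Defs.dist q t x y) y) => z.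
  exact: dist_ge0.
rewrite (Rabs_pos_eq _ h1).
have := Rabs_pos (cost i y (jact q y)).
nra.
Qed.

Definition a q x t := beta i ^ t * stage_cost i q x t.

Lemma ex_a q x : ex_series (a q x).
Proof.
have hb := beta_range g i.
have H : Rabs (beta i) < 1 by rewrite Rabs_pos_eq; lra.
apply: (ex_series_le _ (fun n => beta i ^ n * Mb q)).
  move=> n; rewrite /norm /= /abs /= /a Rabs_mult.
  rewrite (Rabs_pos_eq (beta i ^ n)); last by apply: pow_le; lra.
  apply: Rmult_le_compat_l; first by apply: pow_le; lra.
  exact: stage_bound.
apply: ex_series_scal_r; eexists; exact: is_series_geom H.
Qed.

Lemma J_is q x : is_series (a q x) (J i q x).
Proof.
rewrite /J; apply/is_series_Reals.
apply: epsilon_spec.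
have [l Hl] := ex_a q x; exists l; exact/is_series_Reals.
Qed.

Lemma bellman q x : J i q x = Tq q (J i q) x.
Proof.
have H1 : is_series (fun t => a q x t.+1) (J i q x - a q x 0).
  apply: is_series_incr_1; rewrite /plus /=.
  by replace (J i q x - a q x 0 + a q x 0) with (J i q x) by ring; exact: J_is.
have H2 : is_series (fun t => a q x t.+1)
   (beta i * \big[Rplus/0]_(y : state g) (P q x y * J i q y)).
  apply: is_series_ext; last first.
    apply: (is_series_scal_l (beta i)).
    apply: is_series_bigsum => y.
    exact: (is_series_scal_l (P q x y) _ _ (J_is q y)).
  move=> n; rewrite /scal /= /mult /= /a stage_back big_distrr /= big_distrr /=.
  apply: eq_bigr => w _ /=; ring.
have := is_series_unique _ _ H1; rewrite (is_series_unique _ _ H2).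
rewrite /Tq /a /= /stage_cost.
have E : \big[Rplus/0]_(y : state g) (Defs.dist q 0 x y * cost i y (jact q y)) = cost i x (jact q x) := sum_delta (fun y => cost i y (jact q y)) x.
rewrite E.
move=> ->; ring.
Qed.

Lemma minprinc (Q : state g -> state g -> R) (w : state g -> R) :
  (forall x y, 0 <= Q x y) -> (forall x, \big[Rplus/0]_(y : state g) Q x y = 1) ->
  (forall x, beta i * \big[Rplus/0]_(y : state g) (Q x y * w y) <= w x) ->
  forall x, 0 <= w x.
Proof.
move=> Qnn Qs H x.
have [m Hm] := argmin w x.
have hb := beta_range g i.
have : beta i * w m <= w m.
  apply: Rle_trans (H m).
  apply: Rmult_le_compat_l; first lra.
  rewrite -[X in X <= _]Rmult_1_l -(Qs m) big_distrl /=.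
  apply: sum_le => y; apply: Rmult_le_compat_l => //.
move=> h; have h2 : 0 <= w m by nra.
have := Hm x; lra.
Qed.

Lemma Tdiff q v u x : Tq q v x - Tq q u x =
  beta i * \big[Rplus/0]_(y : state g) (P q x y * (v y - u y)).
Proof.
rewrite /Tq.
have -> : \big[Rplus/0]_(y : state g) (P q x y * (v y - u y)) =
  \big[Rplus/0]_(y : state g) (P q x y * v y) - \big[Rplus/0]_(y : state g) (P q x y * u y).
  rewrite sum_opp; apply: eq_bigr => y _; ring.
ring.
Qed.

Lemma cmp_lower q v : (forall x, v x <= Tq q v x) -> forall x, v x <= J i q x.
Proof.
move=> H x.
suff: 0 <= J i q x - v x by lra.
apply: (minprinc (P q) (fun y => J i q y - v y)); [exact: P_ge0|exact: P_sum1|].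
move=> y; rewrite -Tdiff -bellman; have := H y; lra.
Qed.

Lemma cmp_upper q v : (forall x, Tq q v x <= v x) -> forall x, J i q x <= v x.
Proof.
move=> H x.
suff: 0 <= v x - J i q x by lra.
apply: (minprinc (P q) (fun y => v y - J i q y)); [exact: P_ge0|exact: P_sum1|].
move=> y; rewrite -Tdiff -bellman; have := H y; lra.
Qed.

Lemma cmp_strict q v x0 : (forall x, Tq q v x <= v x) -> Tq q v x0 < v x0 ->
  J i q x0 < v x0.
Proof.
move=> H H0.
have := Tdiff q v (J i q) x0; rewrite -bellman => E.
have : 0 <= \big[Rplus/0]_(y : state g) (P q x0 y * (v y - J i q y)).
  apply: sum_ge0 => y; apply: Rmult_le_pos; first exact: P_ge0.
  have := cmp_upper _ _ H y; lra.
have hb := beta_range g i.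
nra.
Qed.

Lemma jact_upd (pi : jpolicy g) (p p' : policy g i) x : p x = p' x ->
  jact (upd pi i p) x = jact (upd pi i p') x.
Proof.
move=> E; rewrite /jact /upd; apply/ffunP => j; rewrite !ffunE.
case: (eqVneq i j) => [<-|ne]; first by rewrite !dfwith_in.
by rewrite !dfwith_out.
Qed.

Lemma Tq_upd (pi : jpolicy g) (p p' : policy g i) v x : p x = p' x ->
  Tq (upd pi i p) v x = Tq (upd pi i p') v x.
Proof. by move=> E; rewrite /Tq /P (jact_upd _ _ _ _ E). Qed.

Lemma exists_best (pi : jpolicy g) : exists p, best_reply pi i p.
Proof.
pose F (p : policy g i) := \big[Rplus/0]_(x : state g) J i (upd pi i p) x.
have [ps Hps] := argmin F (pi i).
exists ps.
have opt : forall (p' : policy g i) x, J i (upd pi i ps) x <= Tq (upd pi i p') (J i (upd pi i ps)) x.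
  move=> p' x0; apply: Rnot_lt_le => Hlt.
  pose p'' : policy g i := [ffun y => if y == x0 then p' y else ps y].
  have H1 : forall y, Tq (upd pi i p'') (J i (upd pi i ps)) y <= J i (upd pi i ps) y.
    move=> y; case: (eqVneq y x0) => [->|ne].
      rewrite (@Tq_upd pi p'' p'); first lra.
      by rewrite /p'' ffunE eqxx.
    rewrite (@Tq_upd pi p'' ps); first by rewrite -bellman; lra.
    by rewrite /p'' ffunE (negbTE ne).
  have H2 : Tq (upd pi i p'') (J i (upd pi i ps)) x0 < J i (upd pi i ps) x0.
    rewrite (@Tq_upd pi p'' p') //; by rewrite /p'' ffunE eqxx.
  have := Hps p''; rewrite /F => HF.
  have := sum_lt _ _ _ (cmp_upper _ _ H1) (cmp_strict _ _ _ H1 H2); lra.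
move=> q x; apply: cmp_lower => y; exact: opt.
Qed.

Lemma upd_self (pi : jpolicy g) : upd pi i (pi i) = pi.
Proof.
apply/ffunP => j; rewrite /upd ffunE.
case: (eqVneq i j) => [<-|ne]; first by rewrite dfwith_in.
by rewrite dfwith_out.
Qed.

End G.

Definition pb {A : Type} (S : A -> Prop) (p : A) : bool :=
  if excluded_middle_informative (S p) then true else false.

Lemma pbP {A : Type} (S : A -> Prop) p : pb S p = true <-> S p.
Proof. rewrite /pb; case: excluded_middle_informative => //. Qed.

Section Main.
Variable g : game.
Variable Lam : 'I_(nDM g) -> R.

Lemma sbr_rcons (p : jpolicy g) s q : sbr_path p s -> q <> last p s ->
  BRt (last p s) q -> sbr_path p (rcons s q).
Proof.
elim: s p => [|r s IH] p /=; first by move=> _ h1 h2; split.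
by move=> [h1 [h2 h3]] h4 h5; split=> //; split=> //; apply: IH.
Qed.

Definition reach (pi : jpolicy g) (q : jpolicy g) :=
  exists s, sbr_path pi s /\ last pi s = q.

Lemma reach_L pi : Lcumber Lam (reach pi).
Proof.
split; first by exists pi, [::].
move=> p q [s [Hs Hl]] HB.
case: (classic (q = p)) => [->|ne]; first by exists s.
exists (rcons s q); split; last by rewrite last_rcons.
apply: sbr_rcons => //; rewrite Hl //.
by move=> k hk; have [_ ?] := HB k hk.
Qed.

Lemma min_exists n (S : jpolicy g -> Prop) : Lcumber Lam S ->
  (#|[set p | pb S p]| <= n)%N ->
  exists S', min_Lcumber Lam S' /\ forall p, S' p -> S p.
Proof.
elim: n S => [|n IH] S HS Hc.
  exfalso; have [[p Sp] _] := HS.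
  move: Hc; rewrite leqn0 => /eqP/cards0_eq/setP/(_ p).
  by rewrite !inE; move/pbP: Sp => ->.
case: (classic (min_Lcumber Lam S)) => [Hm|Hm]; first by exists S.
have [S' [HS' [Hsub Hns]]] : exists S', Lcumber Lam S' /\ (forall p, S' p -> S p) /\
    ~ (forall p, S p -> S' p).
  apply: NNPP => Hn; apply: Hm; split => // S' h1 h2.
  apply: NNPP => h3; apply: Hn; by exists S'.
have [p0 Hp0] := not_all_ex_not _ _ Hns.
have [Sp0 nS'p0] := imply_to_and _ _ Hp0.
have Hpr : [set p | pb S' p] \proper [set p | pb S p].
  apply/properP; split.
    by apply/subsetP => p; rewrite !inE => /pbP /Hsub /pbP.
  exists p0; rewrite !inE; first exact/pbP.
  by apply/negP => /pbP.
have [S'' [H1 H2]] := IH S' HS' (leq_trans (proper_card Hpr) Hc).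
by exists S''; split => // p /H2 /Hsub.
Qed.

End Main.

Theorem mainTheorem6 (g : game) (Lam : 'I_(nDM g) -> R) :
  (forall pi : jpolicy g, equilibrium pi <-> min_cumber (fun p => p = pi)) /\
  (forall pi : jpolicy g, ~ Pi_cumber Lam pi ->
     exists s : seq (jpolicy g), sbr_path pi s /\ Pi_cumber Lam (last pi s)).
Proof.
split.
  move=> pi; split.
    move=> Heq.
    have Hc : cumber (fun p => p = pi).
      split; first by exists pi.
      move=> p pt -> HB; apply/ffunP => j.
      apply: NNPP => ne; have [_ [x Hx]] := HB j ne.
      have := Heq j (pt j) x; rewrite (upd_self g); lra.
    split => // S' [[p Sp] _] Hsub p' ->.
    by have := Hsub p Sp => E; rewrite -E.
  move=> [[_ Hc] _] j.
  apply: NNPP => Hnb.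
  have [ps Hps] := exists_best g j pi.
  have [q Hq] := not_all_ex_not _ _ Hnb.
  have [x Hx] := not_all_ex_not _ _ Hq.
  have Hlt := Rnot_le_lt _ _ Hx.
  pose pt := upd pi j ps.
  have Hpt : pt j = ps by rewrite /pt /upd ffunE dfwith_in.
  have HB : BRt pi pt.
    move=> k; case: (eqVneq j k) => [<-|ne].
      rewrite Hpt => _; split => //.
      exists x; have := Hps q x; rewrite (upd_self g) in Hlt; lra.
    by rewrite /pt /upd ffunE dfwith_out.
  have E := Hc pi pt erefl HB.
  have E2 : ps = pi j by rewrite -Hpt E.
  have := Hps q x; rewrite E2; lra.
move=> pi _.
have [S [HS Hsub]] := @min_exists g Lam _ _ (reach_L g Lam pi) (leqnn _).
have [[[q Sq] _] _] := HS.
have [s [Hs Hl]] := Hsub q Sq.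
exists s; split => //; rewrite Hl; by exists S.
Qed.
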